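(* For every $n\ge2$, $\operatorname{diam}(\mathcal{C}_3(K_{1,n-1}))=\lfloor 3n/2\rfloor$.
   Context: $K_{1,n-1}$ is the star with one center and $n-1$ leaves. A proper 3-coloring of a tree $T=(V,E)$ is a map $f\colon V\to\mathbb{Z}/3\mathbb{Z}$ with $f(u)\neq f(v)$ for every edge $uv\in E$. The 3-coloring graph $\mathcal{C}_3(T)$ has the proper 3-colorings as vertices, two colorings adjacent iff they differ at exactly one vertex; $\operatorname{diam}$ denotes graph diameter. *)

(* Defs.v *)
From mathcomp Require Import all_boot.
Set Implicit Arguments. Unset Strict Implicit. Unset Printing Implicit Defensive.

Section GraphDist.
Variable T : finType.
Variable e : rel T.

Definition reach (k : nat) (x y : T) : bool :=
  [exists p : k.-tuple T, path e x p && (last x p == y)].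

(* length of a shortest walk from x to y; shortest walks have length < #|T|,
   and #|T| is returned as a sentinel if y is unreachable from x. *)
Definition gdist (x y : T) : nat := find (fun k => reach k x y) (iota 0 #|T|).

Definition gdiam (V : {pred T}) : nat := \max_(x in V) \max_(y in V) gdist x y.
End GraphDist.

Definition star_edge (n : nat) (u v : 'I_n) : bool :=
  (u != v) && ((val u == 0) || (val v == 0)).

(* 3-colorings: maps to Z/3Z, represented by 'I_3. *)
Definition coloring (n : nat) := {ffun 'I_n -> 'I_3}.

Definition proper3 (n : nat) (f : coloring n) : bool :=
  [forall u : 'I_n, forall v : 'I_n, star_edge u v ==> (f u != f v)].

Definition col_adj (n : nat) : rel (coloring n) := fun f g =>
  [&& proper3 f, proper3 g & #|[set x | f x != g x]| == 1].

Definition diam_C3_star (n : nat) : nat :=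
  gdiam (@col_adj n) (fun f => proper3 f).

(* Main.v *)
Require Import Defs.
From mathcomp Require Import all_boot zify.

Section Gen.
Variable T : finType.
Variable e : rel T.

Lemma reach0 x : reach e 0 x x.
Proof. apply/existsP; exists [tuple]; by rewrite /= eqxx. Qed.

Lemma reach_cons k x y z : e x y -> reach e k y z -> reach e k.+1 x z.
Proof.
move=> exy /existsP [p /andP [pp lp]]; apply/existsP; exists [tuple of y :: p].
by rewrite /= exy pp.
Qed.

Lemma reach_cat j k x y z : reach e j x y -> reach e k y z -> reach e (j + k) x z.
Proof.
move=> /existsP [p /andP [pp /eqP lp]] /existsP [q /andP [pq lq]].
apply/existsP; exists [tuple of p ++ q].
by rewrite /= cat_path last_cat pp lp pq.
Qed.

Lemma reach1 x y : e x y -> reach e 1 x y.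
Proof. by move=> h; apply: reach_cons h (reach0 y). Qed.

Lemma gdist_le k x y : k < #|T| -> reach e k x y -> gdist e x y <= k.
Proof.
move=> hk hr; rewrite leqNgt; apply/negP => /(before_find 0).
by rewrite nth_iota // hr.
Qed.

Lemma gdist_reach k x y : k < #|T| -> reach e k x y -> reach e (gdist e x y) x y.
Proof.
move=> hk hr.
have hh : has (fun k => reach e k x y) (iota 0 #|T|).
  by apply/hasP; exists k => //; rewrite mem_iota.
have := nth_find 0 hh; rewrite -/(gdist e x y) nth_iota //.
by move: hh; rewrite has_find size_iota.
Qed.

Lemma reach_inv (phi : T -> nat) : (forall x y, e x y -> phi y <= (phi x).+1) ->
  forall k x y, reach e k x y -> phi y <= phi x + k.
Proof.
move=> hphi k x y /existsP [p /andP [pp /eqP <-]].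
case: p pp => /= s /eqP <-; elim: s x => [|a s IH] x /=; first by rewrite addn0.
move=> /andP [hxa hp]; have := IH a hp; have := hphi _ _ hxa; lia.
Qed.
End Gen.
Arguments reach_cons {T e k x y z}.
Arguments reach_cat {T e j k x y z}.

Lemma third3 (a b x : 'I_3) : a != b -> x != a -> x != b -> val x = 3 - val a - val b.
Proof.
by case: a => [[|[|[|?]]] ?]; case: b => [[|[|[|?]]] ?]; case: x => [[|[|[|?]]] ?].
Qed.


Lemma arith_route N j1 j2 j3 j4 j5 D1 D2 D3 D4 : D1 + D2 = N -> D3 + D4 = N ->
  j1 <= D1 -> j2 <= D3 -> j3 <= D2 -> j4 <= N -> j5 <= D4 ->
  (j1 + j2.+1 <= (3 * N.+1)./2) || (j3 + (j4.+1 + j5.+1) <= (3 * N.+1)./2).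
Proof. rewrite -divn2; move=> *; apply/orP; lia. Qed.
Arguments arith_route {N j1 j2 j3 j4 j5 D1 D2 D3 D4}.

Lemma third_ex (a b : 'I_3) : a != b -> exists c : 'I_3,
  [/\ c != a, c != b & forall x : 'I_3, x != a -> (x == c) = (x != b)].
Proof.
move=> ab; exists (inord (3 - a - b)).
move: ab; case: a => [[|[|[|?]]] ?]; case: b => [[|[|[|?]]] ?] => //= _;
  split => //; try case => [[|[|[|?]]] ?]; rewrite -?val_eqE /= ?inordK //.
Qed.


Section Star.
Variable N : nat.
Notation C := (coloring N.+1).

Definition dif (h1 h2 : C) := [set v | h1 v != h2 v].
Definition cnt (h : C) (k : nat) :=
  #|[set v : 'I_N.+1 | (v != ord0) && (val (h v) == k)]|.
Definition Phi (h : C) :=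
  if val (h ord0) == 0 then cnt h 2
  else if val (h ord0) == 1 then minn (N.+1 + cnt h 0) (N.+2 + cnt h 2)
  else (cnt h 0).+1.
Definition mk (z w : 'I_3) : C := [ffun u => if u == ord0 then z else w].

Lemma properP (h : C) : proper3 h <-> (forall u, u != ord0 -> h u != h ord0).
Proof.
split.
  move=> /forallP hp u hu; have /forallP /(_ ord0) := hp u.
  by move=> /implyP; apply; rewrite /star_edge hu /= orbT.
move=> hp; apply/forallP => u; apply/forallP => v; apply/implyP.
rewrite /star_edge => /andP [neq /orP [u0|v0]].
  have eu : u = ord0 by apply: val_inj; apply/eqP.
  by subst u; rewrite eq_sym; apply: hp; rewrite eq_sym.
have ev : v = ord0 by apply: val_inj; apply/eqP.
by subst v; apply: hp.
Qed.

Lemma card_leaves : #|[set~ (ord0 : 'I_N.+1)]| = N.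
Proof. by rewrite cardsC1 card_ord. Qed.

Lemma cnt_le h k : cnt h k <= N.
Proof.
apply: leq_trans (_ : _ <= #|[set~ (ord0 : 'I_N.+1)]|) _; last by rewrite card_leaves.
apply: subset_leq_card; apply/subsetP => u.
by rewrite !inE => /andP [].
Qed.

Lemma dif_le (h1 h2 : C) : h1 ord0 = h2 ord0 -> #|dif h1 h2| <= N.
Proof.
move=> e0; apply: leq_trans (_ : _ <= #|[set~ (ord0 : 'I_N.+1)]|) _; last by rewrite card_leaves.
apply: subset_leq_card; apply/subsetP => u.
rewrite !inE; apply: contra => /eqP ->; by rewrite e0.
Qed.

Lemma cnt_step (h h' : C) k : #|dif h h'| = 1 -> cnt h' k <= (cnt h k).+1.
Proof.
move=> /eqP/cards1P [v hv].
have -> : (cnt h k).+1 = #|v |: [set u : 'I_N.+1 | (u != ord0) && (val (h u) == k)]| + (v \in [set u : 'I_N.+1 | (u != ord0) && (val (h u) == k)]).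
  rewrite cardsU1 /cnt; case: (v \in _) => /=; lia.
apply: leq_trans (leq_addr _ _); apply: subset_leq_card; apply/subsetP => u.
rewrite !inE; case: (eqVneq u v) => [//|nuv] /=.
have : u \notin dif h h' by rewrite hv inE.
by rewrite inE negbK => /eqP ->.
Qed.

Lemma cnt_all (h : C) t : (forall u, u != ord0 -> val (h u) = t) ->
  cnt h t = N /\ (forall k, k != t -> cnt h k = 0).
Proof.
move=> ht; split.
  rewrite /cnt; transitivity #|[set~ (ord0 : 'I_N.+1)]|; last exact: card_leaves.
  apply: eq_card => u; rewrite !inE.
  by case: (eqVneq u ord0) => //= nu; rewrite ht ?eqxx.
move=> k nk; rewrite /cnt; apply/eqP; rewrite cards_eq0; apply/eqP/setP => u.
rewrite !inE; case: (eqVneq u ord0) => //= nu; rewrite ht //.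
by rewrite eq_sym (negbTE nk).
Qed.

Lemma Phi_ge1 (h : C) : val (h ord0) = 1 -> N.+1 <= Phi h.
Proof. rewrite /Phi => -> /=; lia. Qed.

Lemma Phi_step (h h' : C) : col_adj h h' -> Phi h' <= (Phi h).+1.
Proof.
move=> /and3P [ph ph' /eqP d1].
have s0 := cnt_step h h' 0 d1; have s2 := cnt_step h h' 2 d1.
have l0 := cnt_le h 0; have l2 := cnt_le h 2.
have l0' := cnt_le h' 0; have l2' := cnt_le h' 2.
have b0 := ltn_ord (h ord0); have b0' := ltn_ord (h' ord0).
case: (eqVneq (h ord0) (h' ord0)) => [e|ne].
  rewrite /Phi -e; case: ifP => _; first lia.
  case: ifP => _; lia.
(* center changes: leaves all third color *)
have hv : dif h h' = [set ord0].
  move: (d1) => /eqP/cards1P [v hv]; rewrite /dif hv; congr [set _].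
  have : ord0 \in [set x | h x != h' x] by rewrite inE.
  by rewrite hv inE => /eqP.
have ne' : val (h ord0) != val (h' ord0) by [].
have leaf : forall u, u != ord0 -> val (h u) = 3 - val (h ord0) - val (h' ord0)
                      /\ h' u = h u.
  move=> u nu.
  have eu : h' u = h u.
    have : u \notin dif h h' by rewrite hv inE.
    by rewrite inE negbK => /eqP ->.
  split=> //.
  have /properP /(_ u nu) := ph; have /properP /(_ u nu) := ph'.
  rewrite eu => n1 n2; exact: third3.
have [ca cb] := cnt_all h _ (fun u nu => proj1 (leaf u nu)).
have [ca' cb'] : cnt h' (3 - val (h ord0) - val (h' ord0)) = N /\
   (forall k, k != 3 - val (h ord0) - val (h' ord0) -> cnt h' k = 0).
  apply: cnt_all => u nu; have [q1 q2] := leaf u nu; by rewrite q2.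
move: ne' ca cb ca' cb'; rewrite /Phi.
case: (h ord0) b0 => [[|[|[|a]]] ?] //= _;
case: (h' ord0) b0' => [[|[|[|b]]] ?] //= _ _ ca cb ca' cb'.
all: simpl in *; move: ca ca'; rewrite /subn /subn_rec /= => ca ca'.
all: first [ have := cb 0 isT | idtac ]; first [ have := cb 1 isT | idtac ];
  first [ have := cb 2 isT | idtac ]; first [ have := cb' 0 isT | idtac ];
  first [ have := cb' 1 isT | idtac ]; first [ have := cb' 2 isT | idtac ]; lia.
Qed.

Lemma difC (h1 h2 : C) : dif h1 h2 = dif h2 h1.
Proof. by apply/setP => u; rewrite !inE eq_sym. Qed.

Lemma same_center (h1 h2 : C) : proper3 h1 -> proper3 h2 -> h1 ord0 = h2 ord0 ->
  exists2 j, j <= #|dif h1 h2| & reach (@col_adj N.+1) j h1 h2.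
Proof.
move=> p1 p2 e0.
suff H : forall k (h1 : C), proper3 h1 -> h1 ord0 = h2 ord0 -> #|dif h1 h2| = k ->
  exists2 j, j <= k & reach (@col_adj N.+1) j h1 h2 by exact: H.
elim=> [|k IH] {p1 e0} h1 p1 e0 dk.
  exists 0 => //; have -> : h1 = h2; last exact: reach0.
  apply/ffunP => u; move: dk => /eqP; rewrite cards_eq0 => /eqP/setP/(_ u).
  by rewrite !inE => /negbFE/eqP.
have : 0 < #|dif h1 h2| by rewrite dk.
move=> /card_gt0P [v hv]; move: (hv); rewrite inE => hv'.
have nv : v != ord0 by apply: contraNneq hv' => ->; rewrite e0.
pose h' : C := [ffun u => if u == v then h2 v else h1 u].
have h'0 : h' ord0 = h2 ord0 by rewrite ffunE eq_sym (negbTE nv).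
have p' : proper3 h'.
  apply/properP => u nu; rewrite h'0 ffunE; case: (eqVneq u v) => [<-|_].
    by have /properP := p2; apply.
  by rewrite -e0; have /properP := p1; apply.
have d' : #|dif h' h2| = k.
  move: dk; rewrite (cardsD1 v) hv add1n => -[<-]; apply: eq_card => u.
  rewrite !inE ffunE; case: (eqVneq u v) => [<-|_] //=; by rewrite eqxx.
have [j jk rj] := IH h' p' h'0 d'.
exists j.+1 => //; apply: reach_cons rj.
apply/and3P; split => //; apply/cards1P; exists v; apply/setP => u.
rewrite !inE ffunE; case: (eqVneq u v) => [e|_]; rewrite /= ?e ?hv' ?eqxx //.
Qed.

Lemma mk0 (z w : 'I_3) : mk z w ord0 = z.
Proof. by rewrite ffunE eqxx. Qed.

Lemma proper_mk (z w : 'I_3) : z != w -> proper3 (mk z w).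
Proof.
move=> zw; apply/properP => u nu; rewrite !ffunE (negbTE nu) eqxx.
by rewrite eq_sym.
Qed.

Lemma adj_mk (z z' w : 'I_3) : z != w -> z' != w -> z != z' ->
  col_adj (mk z w) (mk z' w).
Proof.
move=> zw z'w zz; apply/and3P; split; try exact: proper_mk.
apply/cards1P; exists ord0; apply/setP => u; rewrite !inE !ffunE.
by case: (eqVneq u ord0) => _; rewrite ?zz ?eqxx.
Qed.

Lemma split_count (h : C) (a b c : 'I_3) : proper3 h -> h ord0 = a ->
  (forall x : 'I_3, x != a -> (x == c) = (x != b)) ->
  #|dif h (mk a c)| + #|dif h (mk a b)| = N.
Proof.
move=> ph e0 key.
transitivity #|[set~ (ord0 : 'I_N.+1)]|; last exact: card_leaves.
rewrite -(cardsID (dif h (mk a c)) [set~ ord0]); congr (_ + _); apply: eq_card => u;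
  rewrite !inE !ffunE; case: (eqVneq u ord0) => [->|nu] /=; rewrite ?e0 ?eqxx //.
have /properP /(_ u nu) := ph; rewrite e0 => hu.
by rewrite andbT negbK key.
Qed.

Lemma upper (f g : C) : proper3 f -> proper3 g ->
  exists2 j, j <= (3 * N.+1)./2 & reach (@col_adj N.+1) j f g.
Proof.
move=> pf pg; case: (eqVneq (f ord0) (g ord0)) => [e|ne].
  have [j jd rj] := same_center _ _ pf pg e; exists j => //.
  have := leq_trans jd (dif_le _ _ e); clear; rewrite -divn2; lia.
set a := f ord0 in ne *; set b := g ord0 in ne *.
have [c [ca cb key]] := third_ex _ _ ne.
have ba : b != a by rewrite eq_sym.
have keyb : forall x : 'I_3, x != b -> (x == c) = (x != a).
  move=> x xb; case: (eqVneq x a) => [->|xa]; first by rewrite eq_sym (negbTE ca).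
  by rewrite key // xb.
have ac : a != c by rewrite eq_sym.
have bc : b != c by rewrite eq_sym.
have [j1 j1d r1] := same_center _ _ pf (proper_mk _ _ ac) (esym (mk0 a c)).
have [j2 j2d r2] := same_center _ _ (proper_mk _ _ bc) pg (mk0 b c).
have adj1 := adj_mk _ _ _ ac bc ne.
have [j3 j3d r3] := same_center _ _ pf (proper_mk _ _ ne) (esym (mk0 a b)).
have adj12 := adj_mk _ _ _ ne cb ac.
have e4 : mk c b ord0 = mk c a ord0 by rewrite !mk0.
have [j4 j4d r4] := same_center _ _ (proper_mk _ _ cb) (proper_mk _ _ ca) e4.
have j4N := dif_le _ _ e4.
have adj34 := adj_mk _ _ _ ca ba cb.
have [j5 j5d r5] := same_center _ _ (proper_mk _ _ ba) pg (mk0 b a).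
have cf : #|dif f (mk a c)| + #|dif f (mk a b)| = N := split_count _ _ _ _ pf erefl key.
have cg : #|dif g (mk b c)| + #|dif g (mk b a)| = N := split_count _ _ _ _ pg erefl keyb.
rewrite (difC g) (difC g) in cg.
have := arith_route cf cg j1d j2d j3d (leq_trans j4d j4N) j5d.
case/orP => hle.
  exists (j1 + (j2.+1)) => //.
  exact: (reach_cat r1 (reach_cons adj1 r2)).
exists (j3 + (j4.+1 + j5.+1)) => //.
exact: (reach_cat r3 (reach_cons adj12 (reach_cat r4 (reach_cons adj34 r5)))).
Qed.
End Star.

Arguments reach_inv {T e} phi.
Arguments gdist_le {T e k x y}.
Arguments gdist_reach {T e k x y}.

Lemma count_prefix N y : y <= N ->
  #|[set v : 'I_N.+1 | (v != ord0) && (val v <= y)]| = y.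
Proof.
move=> hy; have hy' : y.+1 <= N.+1 by [].
set S := [set widen_ord hy' i | i in 'I_y.+1].
have cS : #|S| = y.+1.
  rewrite card_imset ?card_ord // => i j /(congr1 val) /= /val_inj //.
have memS : forall u : 'I_N.+1, (u \in S) = (val u <= y).
  move=> u; apply/imsetP/idP => [[i _ ->] /=|hu]; first by rewrite -ltnS.
  by exists (Ordinal (hu : u < y.+1)) => //; apply: val_inj.
have : #|S| = (ord0 \in S) + #|S :\ ord0| by apply: cardsD1.
rewrite cS memS /= add1n => -[hS]; rewrite [RHS]hS; apply: eq_card => u.
by rewrite !inE memS.
Qed.

Theorem mainTheorem17 (n : nat) : 2 <= n -> diam_C3_star n = (3 * n)./2.
Proof.
case: n => [//|N] hN.
have big : (3 * N.+1)./2 < 3 ^ N.+1.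
  have := ltn_expl N (isT : 1 < 3); rewrite expnS -divn2; move: (3 ^ N) => t; lia.
have cardT : #|{ffun 'I_N.+1 -> 'I_3}| = 3 ^ N.+1 by rewrite card_ffun !card_ord.
apply/eqP; rewrite eqn_leq; apply/andP; split.
  apply/bigmax_leqP => f pf; apply/bigmax_leqP => g pg.
  have [j hj rj] := upper _ _ _ pf pg.
  have hk : j < #|{ffun 'I_N.+1 -> 'I_3}| by rewrite cardT; exact: leq_ltn_trans hj big.
  exact: leq_trans (gdist_le hk rj) hj.
pose c0 : 'I_3 := ord0.
pose c1 : 'I_3 := Ordinal (isT : 1 < 3).
pose c2 : 'I_3 := Ordinal (isT : 2 < 3).
pose y := (N.+1)./2.
pose f0 := mk N c0 c1.
pose g0 : coloring N.+1 := [ffun u => if u == ord0 then c1 else if val u <= y then c0 else c2].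
have pf0 : proper3 f0 by apply: proper_mk.
have pg0 : proper3 g0.
  apply/properP => u nu; rewrite !ffunE (negbTE nu) eqxx; by case: ifP.
have [j hj rj] := upper _ _ _ pf0 pg0.
have hk : j < #|{ffun 'I_N.+1 -> 'I_3}| by rewrite cardT; exact: leq_ltn_trans hj big.
have r := gdist_reach hk rj.
have hphi := reach_inv (Phi N) (Phi_step N) _ _ _ r.
have phif : Phi N f0 = 0.
  have leaf1 : forall u, u != ord0 -> val (f0 u) = 1.
    by move=> u nu; rewrite ffunE (negbTE nu).
  have [_ cb] := cnt_all N f0 1 leaf1.
  by rewrite /Phi mk0 /=; exact: cb.
have yN : y <= N by rewrite /y -divn2; lia.
have cA : cnt N g0 0 = y.
  rewrite -[RHS](count_prefix _ _ yN); apply: eq_card => u; rewrite !inE ffunE.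
  by case: (eqVneq u ord0) => //= _; case: ifP.
have cC : cnt N g0 0 + cnt N g0 2 = N.
  transitivity #|[set~ (ord0 : 'I_N.+1)]|; last exact: card_leaves.
  rewrite -(cardsID [set v : 'I_N.+1 | (v != ord0) && (val v <= y)] [set~ ord0]).
  congr (_ + _); apply: eq_card => u; rewrite !inE ffunE;
    case: (eqVneq u ord0) => //= _; case: ifP => //=.
have phig : Phi N g0 = minn (N.+1 + cnt N g0 0) (N.+2 + cnt N g0 2).
  by rewrite /Phi ffunE eqxx.
rewrite phif phig add0n in hphi.
apply: leq_trans (_ : _ <= gdist (@col_adj N.+1) f0 g0) _.
  move: hphi cA cC; rewrite /y; move: (cnt N g0 0) (cnt N g0 2) (gdist _ f0 g0).
  clear; move=> A Cc d; rewrite -!divn2; lia.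
rewrite /diam_C3_star /gdiam.
apply: leq_trans (leq_bigmax_cond f0 pf0). exact: (leq_bigmax_cond g0 pg0).
Qed.
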